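(* Let $G$ be a finitely generated amenable group with a fixed finite symmetric generating set $S$. Let $H_i\subseteq G$ be any sequence of finite index subgroups with $I_i=[G:H_i]\to\infty$, and let $C_i=G/H_i$. Then $$\lim_{i\to\infty}\frac{\operatorname{sw}(C_i)}{I_i}=0.$$
   Context: The coset space $C=G/H$ (cosets $gH$) is given the graph structure of the Schreier graph: there is an edge between distinct cosets $x$ and $y$ iff $y=sx$ for some $s\in S$ (where $G$ acts on cosets by left multiplication). For $A\subseteq C$, $\partial A$ denotes the set of vertices of $A$ adjacent to some vertex of the complement of $A$. A sweepout $\mathfrak F$ of the finite graph $C$ is a nested sequence of subsets $\emptyset=F_0\subseteq F_1\subseteq\dots\subseteq F_{|C|}=C$ with $|F_j|=j$; its width is $\operatorname{w}(\mathfrak F)=\max_j|\partial F_j|$. The sweepout width is $\operatorname{sw}(C)=\min_{\mathfrak F}\operatorname{w}(\mathfrak F)$ over all sweepouts. *)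

(* Defs.v *)
From mathcomp Require Import all_boot.
From Stdlib Require Import Reals.

Set Implicit Arguments.
Unset Strict Implicit.
Unset Printing Implicit Defensive.

Record is_group (G : Type) (mul : G -> G -> G) (one : G) (inv : G -> G) : Prop := {
  grp_assoc : forall x y z, mul x (mul y z) = mul (mul x y) z;
  grp_mul1 : forall x, mul one x = x;
  grp_mulV : forall x, mul (inv x) x = one
}.

Definition symmetric_gen (G : Type) (inv : G -> G) (S : seq G) : Prop :=
  forall s, List.In s S -> List.In (inv s) S.

(* S generates G (as a monoid; equivalently as a group since S is symmetric) *)
Definition generates (G : Type) (mul : G -> G -> G) (one : G) (S : seq G) : Prop :=
  forall g, exists l : seq G,
    (forall x, List.In x l -> List.In x S) /\ g = foldr mul one l.

(* von Neumann amenability: a left-invariant finitely additive probability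
   measure defined on all subsets of G *)
Definition amenable (G : Type) (mul : G -> G -> G) (inv : G -> G) : Prop :=
  exists m : (G -> Prop) -> R,
    (forall A, (0 <= m A)%R) /\
    m (fun _ => True) = 1%R /\
    (forall A B, (forall x, A x -> B x -> False) ->
       m (fun x => A x \/ B x) = (m A + m B)%R) /\
    (forall g A, m (fun x => A (mul (inv g) x)) = m A).

Record is_subgroup (G : Type) (mul : G -> G -> G) (one : G) (inv : G -> G)
    (H : G -> Prop) : Prop := {
  sub_one : H one;
  sub_mul : forall x y, H x -> H y -> H (mul x y);
  sub_inv : forall x, H x -> H (inv x)
}.

(* (C, pi, act) is the coset space G/H = {gH}: pi g = gH is surjective,
   pi g = pi h iff gH = hH iff g^-1 h in H, and act is the action of G on
   cosets by left multiplication. *)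
Definition is_coset_space (G : Type) (mul : G -> G -> G) (inv : G -> G)
    (H : G -> Prop) (C : finType) (pi : G -> C) (act : G -> C -> C) : Prop :=
  (forall c, exists g, pi g = c) /\
  (forall g h, pi g = pi h <-> H (mul (inv g) h)) /\
  (forall g h, act g (pi h) = pi (mul g h)).

Section Sweep.
Variables (G : Type) (C : finType) (act : G -> C -> C) (S : seq G).

Definition schreier_adj : rel C :=
  fun x y => (x != y) && has (fun s => act s x == y) S.

Definition vboundary (A : {set C}) : {set C} :=
  [set x in A | [exists y, (y \notin A) && schreier_adj x y]].

Definition is_sweepout (F : {ffun 'I_(#|C|).+1 -> {set C}}) : bool :=
  (F ord0 == set0) && (F ord_max == setT) &&
  [forall j : 'I_(#|C|).+1, #|F j| == nat_of_ord j] &&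
  [forall j : 'I_(#|C|).+1, forall k : 'I_(#|C|).+1,
     ((j <= k)%N) ==> (F j \subset F k)].

Definition sweep_width (F : {ffun 'I_(#|C|).+1 -> {set C}}) : nat :=
  \max_(j : 'I_(#|C|).+1) #|vboundary (F j)|.

(* minimum width over all sweepouts (#|C| is an upper bound for any width,
   and sweepouts always exist) *)
Definition sweepout_width : nat :=
  \big[minn/#|C|]_(F : {ffun 'I_(#|C|).+1 -> {set C}} | is_sweepout F)
     sweep_width F.
End Sweep.

(* Main.v *)
Require Import Defs.
From mathcomp Require Import all_boot zify fingroup perm.
From mathcomp Require Import boolp.
From Stdlib Require Import Reals Classical ClassicalEpsilon Lra.
Set Implicit Arguments. Unset Strict Implicit. Unset Printing Implicit Defensive.

Section Hall.
Variables (A B : finType) (b0 : B).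

Definition NU (N : A -> {set B}) (Y : {set A}) : {set B} := \bigcup_(y in Y) N y.

Lemma NUU N (Y Z : {set A}) : NU N (Y :|: Z) = NU N Y :|: NU N Z.
Proof.
apply/setP=> b; apply/bigcupP/setUP.
  move=> [y]; rewrite inE => /orP [yY|yZ] bN; [left|right]; apply/bigcupP; by exists y.
by move=> [] /bigcupP [y yY bN]; exists y => //; rewrite inE yY ?orbT.
Qed.

Lemma cardUD_le (U V : {set B}) : #|U :|: V| <= #|U :\: V| + #|V|.
Proof.
rewrite cardsU cardsD; have := subset_leq_card (subsetIl U V); lia.
Qed.

Lemma hall n : forall (X : {set A}) (N : A -> {set B}), #|X| <= n ->
  (forall Y : {set A}, Y \subset X -> #|Y| <= #|NU N Y|) ->
  exists f : A -> B, {in X &, injective f} /\ (forall x, x \in X -> f x \in N x).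
Proof.
elim: n => [|n IH] X N hX hH.
  move: hX; rewrite leqn0 => /eqP/cards0_eq ->.
  by exists (fun _ => b0); split=> [x y|x]; rewrite inE.
have [/existsP [Y /and3P [hYprop hY0 /eqP hYt]] | notight] :=
  boolP [exists Y : {set A}, [&& Y \proper X, Y != set0 & #|NU N Y| == #|Y| ]].
- have hYX := proper_sub hYprop.
  have cYX := proper_card hYprop.
  have cY0 : 0 < #|Y| by rewrite card_gt0.
  have cY : #|Y| <= n by lia.
  have [f1 [i1 m1]] := IH Y N cY (fun Z hZ => hH Z (subset_trans hZ hYX)).
  pose N2 x := N x :\: NU N Y.
  have cXY : #|X :\: Y| <= n by rewrite cardsDS //; lia.
  have hH2 : forall Z : {set A}, Z \subset X :\: Y -> #|Z| <= #|NU N2 Z|.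
    move=> Z hZ.
    have eq2 : NU N2 Z = NU N Z :\: NU N Y.
      apply/setP=> b; apply/bigcupP/setDP.
        by move=> [z zZ]; rewrite inE => /andP [h1 h2]; split=> //; apply/bigcupP; exists z.
      by move=> [/bigcupP [z zZ h1] h2]; exists z => //; rewrite inE h1 h2.
    have dZY : Z :&: Y = set0.
      apply/setP=> a; rewrite !inE.
      by apply/negP=> /andP [aZ aY]; move: (subsetP hZ a aZ); rewrite inE aY.
    have sZYX : Z :|: Y \subset X.
      by rewrite subUset hYX andbT (subset_trans hZ) ?subsetDl.
    have h := hH _ sZYX.
    rewrite NUU in h.
    have h3 := cardUD_le (NU N Z) (NU N Y).
    move: h; rewrite cardsU dZY cards0 eq2 => h; lia.
  have [f2 [i2 m2]] := IH _ N2 cXY hH2.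
  exists (fun x => if x \in Y then f1 x else f2 x); split.
    move=> x y xX yX /=.
    case: ifP => xY; case: ifP => yY; first by apply: i1.
    + move=> e; have := m1 x xY; rewrite e => h.
      have := m2 y; rewrite inE yY yX => /(_ isT); rewrite inE.
      by move/andP=> [/negP nh _]; case: nh; apply/bigcupP; exists x.
    + move=> e; have := m1 y yY; rewrite -e => h.
      have := m2 x; rewrite inE xY xX => /(_ isT); rewrite inE.
      by move/andP=> [/negP nh _]; case: nh; apply/bigcupP; exists y.
    + by apply: i2; rewrite inE ?xY ?yY.
  move=> x xX; case: ifP => xY; first exact: m1.
  by have := m2 x; rewrite !inE xY xX => /(_ isT) /andP [].
- have [X0|[x0 x0X]] := set_0Vmem X.
    by exists (fun _ => b0); split=> [x y|x]; rewrite X0 inE.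
  have : #|[set x0]| <= #|NU N [set x0]| by apply: hH; rewrite sub1set.
  rewrite cards1 card_gt0 => /set0Pn [b /bigcupP [y0]]; rewrite inE => /eqP -> bN.
  pose N2 x := N x :\ b.
  have cX : #|X :\ x0| <= n by move: hX; rewrite (cardsD1 x0) x0X; lia.
  have hH2 : forall Z : {set A}, Z \subset X :\ x0 -> #|Z| <= #|NU N2 Z|.
    move=> Z hZ; have [->|Zn0] := eqVneq Z set0; first by rewrite cards0.
    have hZX : Z \proper X.
      apply/properP; split; first by apply: subset_trans hZ (subsetDl _ _).
      exists x0 => //; apply/negP => /(subsetP hZ); by rewrite !inE eqxx.
    have := hH Z (proper_sub hZX).
    have nt : #|NU N Z| != #|Z|.
      by apply/negP=> e; move/existsP: notight; apply; exists Z; rewrite hZX Zn0 e.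
    have e2 : NU N2 Z = NU N Z :\ b.
      apply/setP=> c; apply/bigcupP/setD1P.
        by move=> [z zZ]; rewrite !inE => /andP [h1 h2]; split; [exact: h1|apply/bigcupP; exists z].
      by move=> [h1 /bigcupP [z zZ h2]]; exists z => //; rewrite !inE h1 h2.
    rewrite e2; have := cardsD1 b (NU N Z); move: nt; case: (b \in NU N Z) => /=; lia.
  have [f2 [i2 m2]] := IH _ N2 cX hH2.
  exists (fun x => if x == x0 then b else f2 x); split.
    move=> x y xX yX /=.
    case: (x =P x0) => ex; case: (y =P x0) => ey; first by rewrite ex ey.
    + move=> e; have := m2 y; rewrite !inE yX -e eqxx andbT.
      by move=> h; exfalso; have /andP[] := h (introN eqP ey).
    + move=> e; have := m2 x; rewrite !inE xX e eqxx andbT.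
      by move=> h; exfalso; have /andP[] := h (introN eqP ex).
    + by apply: i2; rewrite !inE; apply/andP; split=> //; apply/eqP.
  move=> x xX; case: eqP => [->//|ex].
  by have := m2 x; rewrite !inE xX andbT => /(_ (introN eqP ex)) /andP [].
Qed.
End Hall.

Section MinHash.
Variables (X : finType) (x0 : X).

Definition rk (s : {perm X}) (y : X) : nat := enum_rank (s y).

Lemma rk_inj s : injective (rk s).
Proof. by move=> y z /val_inj/enum_rank_inj/perm_inj. Qed.

Definition ismin s (Y : {set X}) y := (y \in Y) && [forall z in Y, rk s y <= rk s z].

Definition amin s (Y : {set X}) : X := odflt x0 [pick y | ismin s Y y].

Lemma ismin_ex s (Y : {set X}) : Y != set0 -> exists y, ismin s Y y.
Proof.
case/set0Pn=> y0 y0Y.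
exists [arg min_(y < y0 in Y) rk s y].
case: arg_minnP => // y yY h; rewrite /ismin yY /=.
by apply/forall_inP.
Qed.

Lemma ismin_uniq s Y y z : ismin s Y y -> ismin s Y z -> y = z.
Proof.
move=> /andP [yY /forall_inP hy] /andP [zY /forall_inP hz].
by apply: (@rk_inj s); apply/eqP; rewrite eqn_leq hy ?hz.
Qed.

Lemma aminP s (Y : {set X}) : Y != set0 -> ismin s Y (amin s Y).
Proof.
move=> /(ismin_ex s) [y hy]; rewrite /amin; case: pickP => [z hz //|h].
by rewrite h in hy.
Qed.

Lemma amin_eq s (Y : {set X}) y : ismin s Y y -> amin s Y = y.
Proof.
move=> hy; have Yn0 : Y != set0 by apply/set0Pn; exists y; case/andP: hy.
exact: ismin_uniq (aminP s Yn0) hy.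
Qed.

Lemma amin_union s (Y1 Y2 : {set X}) :
  Y1 != set0 -> amin s (Y1 :|: Y2) \in Y1 :&: Y2 ->
  amin s Y1 = amin s Y2.
Proof.
move=> Y1n0 hm.
have U0 : Y1 :|: Y2 != set0.
  by have [y yY1] := set0Pn _ Y1n0; apply/set0Pn; exists y; rewrite inE yY1.
have /andP [_ /forall_inP hmin] := aminP s U0.
move: hm; rewrite inE => /andP [h1 h2].
have e : forall Y : {set X}, Y \subset Y1 :|: Y2 -> amin s (Y1 :|: Y2) \in Y ->
   amin s Y = amin s (Y1 :|: Y2).
  move=> Y sY hY; apply: amin_eq; rewrite /ismin hY /=.
  by apply/forall_inP=> z zY; apply: hmin; apply: (subsetP sY).
by rewrite e ?subsetUl // e ?subsetUr.
Qed.

Lemma count_min (U : {set X}) u u' : u \in U -> u' \in U ->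
  #|[set s : {perm X} | ismin s U u]| <= #|[set s : {perm X} | ismin s U u']|.
Proof.
move=> uU u'U.
pose t := tperm u u'.
pose F (s : {perm X}) : {perm X} := (t * s)%g.
have Finj : injective F by move=> s1 s2; apply: mulgI.
rewrite -(card_imset _ Finj); apply: subset_leq_card.
apply/subsetP=> s'; case/imsetP=> s; rewrite inE => hs ->; rewrite inE.
have tU : forall v, v \in U -> t v \in U.
  by move=> v vU; rewrite /t permE /=; case: ifP => _ //; case: ifP.
move: hs => /andP [_ /forall_inP hs]; rewrite /ismin u'U /=.
apply/forall_inP=> z zU; rewrite /rk /F !permM.
have -> : t u' = u by rewrite /t tpermR.
by have := hs (t z) (tU z zU).
Qed.

Lemma count_min_eq (U : {set X}) u u' : u \in U -> u' \in U ->
  #|[set s : {perm X} | ismin s U u]| = #|[set s : {perm X} | ismin s U u']|.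
Proof. by move=> h h'; apply/eqP; rewrite eqn_leq !count_min. Qed.

Lemma count_D (U D : {set X}) : U != set0 -> D \subset U ->
  #|U| * #|[set s : {perm X} | amin s U \in D]| = #|D| * #|{perm X}|.
Proof.
move=> Un0 DU; have [u uU] := set0Pn _ Un0.
pose c := #|[set s : {perm X} | ismin s U u]|.
have part : forall E : {set X}, E \subset U ->
   #|[set s : {perm X} | amin s U \in E]| = #|E| * c.
  move=> E EU.
  rewrite -sum1_card (partition_big (fun s => amin s U) (mem E)); last first.
    by move=> s; rewrite inE.
  rewrite -sum_nat_const; apply: eq_bigr => v vE.
  have vU : v \in U := subsetP EU v vE.
  rewrite /c -(count_min_eq vU uU) -sum1_card; apply: eq_bigl => s.
  rewrite !inE; apply/andP/idP.
    by move=> [_ /eqP <-]; apply: aminP.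
  by move=> h; rewrite (amin_eq h) eqxx.
have eP : #|{perm X}| = #|U| * c.
  rewrite -(part U (subxx U)); apply: eq_card => s.
  by rewrite !inE (andP (aminP s Un0)).1.
by rewrite part // eP mulnCA.
Qed.

Lemma average (I : finType) (U D : I -> {set X}) (N d : nat) :
  (forall i, U i != set0) -> (forall i, D i \subset U i) ->
  (forall i, N <= #|U i|) -> (forall i, #|D i| <= d) ->
  exists s : {perm X}, N * #|[set i | amin s (U i) \in D i]| <= #|I| * d.
Proof.
move=> U0 DU NU Dd.
pose f (s : {perm X}) := #|[set i | amin s (U i) \in D i]|.
have key : N * (\sum_s f s) <= #|I| * d * #|{perm X}|.
  have -> : \sum_s f s = \sum_i #|[set s : {perm X} | amin s (U i) \in D i]|.
    rewrite /f; under eq_bigr do rewrite -sum1_card.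
    under eq_bigr do rewrite big_mkcond.
    rewrite exchange_big /=; apply: eq_bigr => i _.
    by rewrite -sum1_card [RHS]big_mkcond; apply: eq_bigr => s _; rewrite !inE.
  apply: (@leq_trans (\sum_(i : I) d * #|{perm X}|)); last by rewrite sum_nat_const mulnA.
  rewrite big_distrr /=; apply: leq_sum => i _.
  apply: (@leq_trans (#|U i| * #|[set s : {perm X} | amin s (U i) \in D i]|)).
    by rewrite leq_mul2r NU orbT.
  by rewrite count_D // leq_mul2r Dd orbT.
have [s hs|] := pickP (fun s => N * f s <= #|I| * d).
  by exists s.
move=> h; exfalso.
have P0 : 0 < #|{perm X}| by apply/card_gt0P; exists 1%g.
have h2 : \sum_(s : {perm X}) (#|I| * d).+1 <= N * \sum_s f s.
  rewrite big_distrr /=; apply: leq_sum => s _.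
  by rewrite ltnNge h.
move: h2; rewrite sum_nat_const => h2.
move: key h2; set P := #|{perm X}|; set K := #|I| * d; set Q := N * _.
move: P0; rewrite -/P; nia.
Qed.
End MinHash.

Section Grp.
Variables (G : Type) (mul : G -> G -> G) (one : G) (inv : G -> G).
Hypothesis HG : is_group mul one inv.

Lemma gA x y z : mul x (mul y z) = mul (mul x y) z. Proof. exact (grp_assoc HG x y z). Qed.
Lemma g1m x : mul one x = x. Proof. exact (grp_mul1 HG x). Qed.
Lemma gVm x : mul (inv x) x = one. Proof. exact (grp_mulV HG x). Qed.
Lemma gcanl a x y : mul a x = mul a y -> x = y.
Proof. by move=> h; rewrite -(g1m x) -(g1m y) -(gVm a) -!gA h. Qed.
Lemma gm1 x : mul x one = x.
Proof. by apply: (@gcanl (inv x)); rewrite gA gVm g1m. Qed.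
Lemma gmV x : mul x (inv x) = one.
Proof. by apply: (@gcanl (inv x)); rewrite gA gVm g1m gm1. Qed.
Lemma gVK x : inv (inv x) = x.
Proof. by apply: (@gcanl (inv x)); rewrite gVm gmV. Qed.
Lemma gVM x y : inv (mul x y) = mul (inv y) (inv x).
Proof.
apply: (@gcanl (mul x y)); rewrite gmV -gA [mul y _]gA gmV g1m gmV //.
Qed.
Lemma gKm x y : mul (inv x) (mul x y) = y. Proof. by rewrite gA gVm g1m. Qed.
Lemma gmK x y : mul x (mul (inv x) y) = y. Proof. by rewrite gA gmV g1m. Qed.
End Grp.

Lemma InP (T : eqType) (x : T) (s : seq T) : List.In x s <-> x \in s.
Proof.
elim: s => [|a s IH] //=; rewrite inE; split.
  by move=> [->|/IH ->]; rewrite ?eqxx ?orbT.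
by case/orP=> [/eqP ->|/IH]; [left|right].
Qed.

Lemma bigmin_le (I : finType) (P : pred I) (w : I -> nat) x i0 :
  P i0 -> \big[minn/x]_(i | P i) w i <= w i0.
Proof.
move=> Pi0; rewrite unlock.
have : i0 \in index_enum I by rewrite mem_index_enum.
elim: (index_enum I) => [|a r IH] //=; rewrite inE => /orP [/eqP <-|h].
  by rewrite Pi0 geq_minl.
by case: ifP => _; rewrite ?IH // (leq_trans (geq_minr _ _)) ?IH.
Qed.

Section SweepKey.
Variables (G : Type) (C : finType) (act : G -> C -> C) (S : seq G).
Variables (key : C -> nat) (Z : {set C}) (N : nat).
Hypothesis keyZ : forall c, (key c == 0) = (c \in Z).
Hypothesis keyadj : forall v w, v \notin Z -> schreier_adj act S v w ->
  key w = key v \/ key w = 0.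
Hypothesis keyN : forall k, 0 < k -> #|[set c | key c == k]| <= N.

Let L := sort (fun a b => key a <= key b) (enum C).

Lemma L_perm : perm_eq L (enum C). Proof. by rewrite perm_sort. Qed.
Lemma L_uniq : uniq L. Proof. by rewrite (perm_uniq L_perm) enum_uniq. Qed.
Lemma L_size : size L = #|C|. Proof. by rewrite (perm_size L_perm) cardE. Qed.
Lemma L_mem x : x \in L. Proof. by rewrite (perm_mem L_perm) mem_enum. Qed.

Lemma L_sorted j v w : v \in take j L -> w \in drop j L -> key v <= key w.
Proof.
have tr : transitive (fun a b : C => key a <= key b).
  by move=> a b c h1 h2; apply: leq_trans h1 h2.
have := sort_sorted (fun a b : C => leq_total (key a) (key b)) (enum C).
rewrite -/L (sorted_pairwise tr) -{1}(cat_take_drop j L) pairwise_cat.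
by case/andP=> /allrelP h _; apply: h.
Qed.

Definition sweepF : {ffun 'I_(#|C|).+1 -> {set C}} :=
  [ffun j : 'I_(#|C|).+1 => [set x in take j L]].

Lemma sweepF_ok : is_sweepout sweepF.
Proof.
rewrite /is_sweepout -!andbA !ffunE /=; apply/and4P; split.
- by apply/eqP/setP=> x; rewrite !inE take0.
- apply/eqP/setP=> x; rewrite !inE -L_size take_size; exact: L_mem.
- apply/forallP=> j; rewrite ffunE cardsE (card_uniqP (take_uniq _ L_uniq)).
  by rewrite size_takel // L_size -ltnS.
- apply/forallP=> j; apply/forallP=> k; apply/implyP=> jk.
  rewrite !ffunE; apply/subsetP=> x; rewrite !inE => h.
  rewrite -(subnKC jk) takeD mem_cat h //.
Qed.

Lemma vb_bound j : #|vboundary act S [set x in take j L]| <= #|Z| + N.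
Proof.
set B := vboundary _ _ _.
have hB : forall v, v \in B -> v \notin Z -> exists w, w \in drop j L /\ key w = key v.
  move=> v; rewrite inE => /andP [vT /existsP [w /andP [wT adj]]] vZ.
  have wD : w \in drop j L.
    have := L_mem w; rewrite -{1}(cat_take_drop j L) mem_cat => /orP [h|//].
    by move: wT; rewrite inE h.
  have vT' : v \in take j L by move: vT; rewrite inE.
  exists w; split=> //.
  have le := L_sorted vT' wD.
  case: (keyadj vZ adj) => // w0; move: le; rewrite w0 leqn0 keyZ => vZ'.
  by rewrite vZ' in vZ.
have [sBZ|] := boolP (B \subset Z).
  by rewrite (leq_trans (subset_leq_card sBZ)) ?leq_addr.
case/subsetPn=> v0 v0B v0Z.
have key_eq : forall v, v \in B -> v \notin Z -> key v = key v0.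
  move=> v vB vZ.
  have [w [wD kw]] := hB v vB vZ; have [w0 [w0D kw0]] := hB v0 v0B v0Z.
  have vT : v \in take j L by move: vB; rewrite inE => /andP [] ; rewrite inE.
  have v0T : v0 \in take j L by move: v0B; rewrite inE => /andP [] ; rewrite inE.
  apply/eqP; rewrite eqn_leq -{1}kw0 -{2}kw.
  by rewrite (L_sorted vT w0D) (L_sorted v0T wD).
have k0 : 0 < key v0 by rewrite lt0n keyZ.
have sub : B \subset Z :|: [set c | key c == key v0].
  apply/subsetP=> v vB; rewrite !inE; case: (boolP (v \in Z)) => //= vZ.
  by rewrite key_eq.
apply: leq_trans (subset_leq_card sub) _.
by rewrite (leq_trans (leq_card_setU _ _)) // leq_add2l keyN.
Qed.

Lemma sw_bound : sweepout_width act S <= #|Z| + N.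
Proof.
rewrite /sweepout_width.
apply: leq_trans (@bigmin_le _ (@is_sweepout C) (sweep_width act S) _ _ sweepF_ok) _.
rewrite /sweep_width.
apply/bigmax_leqP=> j _; rewrite ffunE; exact: vb_bound.
Qed.
End SweepKey.

Lemma sum_ind_ord n a b : \sum_(t < n) (a <= t < b) = minn b n - a.
Proof.
elim: n => [|n IH]; first by rewrite big_ord0; lia.
rewrite big_ord_recr /= IH.
case: (leqP a n) => ha; case: (ltnP n b) => hb /=; lia.
Qed.

Lemma sum_count_eq (T : Type) (C : finType) (h : T -> C) (L : seq T) :
  \sum_(x : C) count (fun f => h f == x) L = size L.
Proof.
elim: L => [|a L IH] /=; first by rewrite big1.
rewrite big_split /= IH (bigD1 (h a)) //= eqxx big1 // => x.
by rewrite eq_sym => /negbTE ->.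
Qed.

Lemma count_diff (T : eqType) (C : finType) (h : T -> C) (L1 L2 : seq T) :
  uniq L1 ->
  \sum_(x : C) (count (fun f => h f == x) L1 - count (fun f => h f == x) L2)
  <= count (fun f => f \notin L2) L1.
Proof.
move=> u1.
rewrite -size_filter -(sum_count_eq h).
apply: leq_sum => x _.
set p := (fun f => h f == x).
have e1 := count_predUI (fun f => p f && (f \in L2)) (fun f => p f && (f \notin L2)) L1.
have e2 : count (predU (fun f => p f && (f \in L2)) (fun f => p f && (f \notin L2))) L1
          = count p L1.
  by apply: eq_count => f /=; case: (p f); case: (f \in L2).
have e3 : count (predI (fun f => p f && (f \in L2)) (fun f => p f && (f \notin L2))) L1 = 0.
  by apply/eqP; rewrite -leqn0 leqNgt -has_count; apply/hasP => [[f _]] /=;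
     case: (p f); case: (f \in L2).
have e4 : count (fun f => p f && (f \in L2)) L1 <= count p L2.
  rewrite -!size_filter; apply: uniq_leq_size; first exact: filter_uniq.
  by move=> f; rewrite !mem_filter => /andP [/andP [-> ->]].
have e5 : count (fun f => p f && (f \notin L2)) L1 = count p [seq f <- L1 | f \notin L2].
  by rewrite count_filter.
lia.
Qed.

Section Hash.
Variables (G : Type) (mul : G -> G -> G) (one : G) (inv : G -> G).
Hypothesis HG : is_group mul one inv.
Local Notation gT := {classic G}.
Variables (C : finType) (act : G -> C -> C).
Hypothesis act_mul : forall g h c, act (mul g h) c = act g (act h c).
Hypothesis act_one : forall c, act one c = c.
Variables (S : seq gT) (F : seq gT) (e : nat) (c0 : C).
Hypothesis Ssym : forall s, s \in S -> (inv s : gT) \in S.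
Hypothesis uF : uniq F.
Hypothesis F0 : 0 < size F.
Hypothesis Fol : forall s, s \in S -> count (fun f => (mul s f : gT) \notin F) F <= e.

Local Notation N := (size F).
Local Notation X := (C * 'I_N.+1)%type.

Definition mult (c x : C) := count (fun f : gT => act (inv f) c == x) F.
Definition Kc (c : C) : {set X} := [set p : X | p.2 < mult c p.1].

Definition lmul (a : gT) : gT -> gT := fun x => mul a x.

Lemma mult_le c x : mult c x <= N. Proof. exact: count_size. Qed.

Lemma card_between (m1 m2 : C -> nat) : (forall x, m1 x <= N) ->
  #|[set p : X | (m2 p.1 <= p.2) && (p.2 < m1 p.1)]| = \sum_x (m1 x - m2 x).
Proof.
move=> hm.
rewrite -sum1_card big_mkcond /=.
rewrite (eq_bigr (fun p : X => ((m2 p.1 <= p.2) && (p.2 < m1 p.1) : nat))); last first.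
  by move=> p _; rewrite inE; case: (_ && _).
rewrite -(pair_bigA _ (fun (x : C) (t : 'I_N.+1) => ((m2 x <= t) && (t < m1 x) : nat))).
apply: eq_bigr => x _.
have := sum_ind_ord N.+1 (m2 x) (m1 x); rewrite (minn_idPl _) => [<-//|]; exact: leq_trans (hm x) _.
Qed.

Lemma card_Kc c : #|Kc c| = N.
Proof.
have -> : Kc c = [set p : X | ((fun _ => 0) p.1 <= p.2) && (p.2 < mult c p.1)].
  by apply/setP=> p; rewrite !inE.
rewrite (@card_between (mult c) (fun _ => 0)).
- rewrite -(sum_count_eq (fun f : gT => act (inv f) c) F).
  by apply: eq_bigr => x _; rewrite subn0.
- exact: mult_le.
Qed.

Lemma mult_act s c x : mult (act s c) x =
  count (fun g : gT => act (inv g) c == x) (map (lmul (inv s)) F).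
Proof.
rewrite /mult count_map; apply: eq_count => f /=.
by rewrite (gVM HG) (gVK HG) act_mul.
Qed.

Lemma inj_mulV (s : gT) : injective (lmul (inv s)).
Proof. by move=> a b; apply: (gcanl HG). Qed.

Lemma card_KD s c : s \in S -> #|Kc c :\: Kc (act s c)| <= e.
Proof.
move=> sS.
have -> : Kc c :\: Kc (act s c) =
   [set p : X | (mult (act s c) p.1 <= p.2) && (p.2 < mult c p.1)].
  by apply/setP => p; rewrite !inE -leqNgt.
rewrite card_between; last exact: mult_le.
under eq_bigr do rewrite mult_act.
rewrite /mult.
apply: leq_trans (@count_diff gT C (fun g : gT => act (inv g) c) F (map (lmul (inv s)) F) uF) _.
apply: leq_trans (Fol sS); rewrite leq_eqVlt; apply/orP; left; apply/eqP.
apply: eq_count => f /=; congr negb.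
have ef : (f : gT) = lmul (inv s) (mul s f) by rewrite /lmul (gKm HG).
by rewrite {1}ef (mem_map (@inj_mulV s)).
Qed.

Lemma card_DK s c : s \in S -> #|Kc (act s c) :\: Kc c| <= e.
Proof.
move=> sS.
have -> : Kc (act s c) :\: Kc c =
   [set p : X | (mult c p.1 <= p.2) && (p.2 < mult (act s c) p.1)].
  by apply/setP => p; rewrite !inE -leqNgt.
rewrite card_between; last exact: mult_le.
under eq_bigr do rewrite mult_act.
have u' : uniq (map (lmul (inv s)) F) by rewrite map_inj_uniq //; apply: inj_mulV.
rewrite /mult.
apply: leq_trans (@count_diff gT C (fun g : gT => act (inv g) c) _ F u') _.
rewrite count_map; exact: Fol (Ssym sS).
Qed.


Let x0 : X := (c0, ord0).

Lemma Kc0 c : Kc c != set0.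
Proof. by rewrite -card_gt0 card_Kc. Qed.

Section Lab.
Variable sg : {perm X}.
Definition lab c : C := (amin x0 sg (Kc c)).1.

Lemma lab_class l : #|[set c | lab c == l]| <= N.
Proof.
apply: (@leq_trans #|[set x in map (fun f : gT => act f l) F]|).
  apply: subset_leq_card; apply/subsetP => c; rewrite !inE => /eqP hl.
  have := (andP (aminP x0 sg (Kc0 c))).1; rewrite inE /mult.
  move: hl; rewrite /lab; case: (amin _ _ _) => x t /= -> ht.
  have : 0 < count (fun f : gT => act (inv f) c == l) F by apply: leq_ltn_trans ht.
  rewrite -has_count => /hasP [f fF /eqP hf]; apply/mapP; exists f => //.
  by rewrite -hf -act_mul (gmV HG) act_one.
by rewrite cardsE (leq_trans (card_size _)) // size_map.
Qed.

Definition Zs : {set C} := [set c | has (fun s : gT => lab c != lab (act s c)) S].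

Definition keyf c : nat := if c \in Zs then 0 else (enum_rank (lab c)).+1.

Lemma keyZ c : (keyf c == 0) = (c \in Zs).
Proof. by rewrite /keyf; case: ifP. Qed.

Lemma keyadj v w : v \notin Zs -> schreier_adj act S v w ->
  keyf w = keyf v \/ keyf w = 0.
Proof.
move=> vZ /andP [_ /(@hasP gT) [s sS /eqP <-]].
have el : lab (act s v) = lab v.
  by move: vZ; rewrite inE => /hasPn /(_ s sS); rewrite negbK eq_sym => /eqP.
rewrite /keyf (negbTE vZ) el; case: ifP; by [right|left].
Qed.

Lemma keyN k : 0 < k -> #|[set c | keyf c == k]| <= N.
Proof.
move=> k0.
case: (pickP (fun c => keyf c == k)) => [c1 /eqP hc1|none]; last first.
  rewrite (_ : [set c | keyf c == k] = set0) ?cards0 //.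
  by apply/setP=> c; rewrite !inE; exact: none.
apply: leq_trans (lab_class (lab c1)); apply: subset_leq_card.
apply/subsetP=> c; rewrite !inE => /eqP hc.
have : keyf c = keyf c1 by rewrite hc hc1.
rewrite /keyf; case: ifP => cZ; case: ifP => c1Z; try (by move: k0; rewrite -hc1 -?hc /keyf ?cZ ?c1Z).
by move=> [/val_inj/enum_rank_inj ->].
Qed.

End Lab.

Lemma main_hash : exists z, N * z <= #|C| * size S * (e + e) /\
  sweepout_width act S <= z + N.
Proof.
pose I : finType := (C * 'I_(size S))%type.
pose sv (i : I) : C := act (nth one S i.2) i.1.
pose U (i : I) := Kc i.1 :|: Kc (sv i).
pose D (i : I) := U i :\: (Kc i.1 :&: Kc (sv i)).
have nthS : forall i : I, (nth one S i.2 : gT) \in S by move=> i; apply: mem_nth.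
have [sg hsg] : exists sg : {perm X}, N * #|[set i | amin x0 sg (U i) \in D i]| <= #|I| * (e + e).
  apply: average.
  - move=> i; have [p hp] := set0Pn _ (Kc0 i.1); apply/set0Pn; exists p.
    by rewrite inE hp.
  - by move=> i; apply: subsetDl.
  - by move=> i; rewrite -{1}(card_Kc i.1); apply/subset_leq_card/subsetUl.
  - move=> i; apply: (@leq_trans #|(Kc i.1 :\: Kc (sv i)) :|: (Kc (sv i) :\: Kc i.1)|).
      apply: subset_leq_card; apply/subsetP=> p; rewrite /D /U !(in_setU, in_setD, in_setI).
      by case: (p \in Kc i.1); case: (p \in Kc (sv i)).
    apply: leq_trans (leq_card_setU _ _) _.
    by rewrite leq_add ?card_KD ?card_DK.
exists #|Zs sg|; split.
  apply: leq_trans _ (leq_trans hsg _); last by rewrite card_prod card_ord.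
  rewrite leq_mul2l; apply/orP; right.
  apply: (@leq_trans #|[set i.1 | i in [set i | amin x0 sg (U i) \in D i]]|); last first.
    exact: leq_imset_card.
  apply: subset_leq_card; apply/subsetP=> c; rewrite inE => /(@hasP gT) [s sS hs].
  have iS : index s S < size S by rewrite index_mem.
  apply/imsetP; exists (c, Ordinal iS) => //.
  rewrite inE; apply/negPn/negP => nD.
  have eS : nth one S (index s S) = s := (@nth_index gT one s S sS).
  have U0 : U (c, Ordinal iS) != set0.
    have [p hp] := set0Pn _ (Kc0 c); apply/set0Pn; exists p; by rewrite inE hp.
  have hU := (andP (aminP x0 sg U0)).1.
  have hI : amin x0 sg (U (c, Ordinal iS)) \in Kc c :&: Kc (act s c).
    by move: nD hU; rewrite /D in_setD /sv /= eS => /negPn; case: (_ \in _ :&: _).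
  move: hs; rewrite /lab (@amin_union _ x0 sg (Kc c) (Kc (act s c)) (Kc0 c)) ?eqxx //.
  by move: hI; rewrite /U /sv /= eS.
apply: (@sw_bound G C act S (keyf sg) (Zs sg) N); [exact: keyZ|exact: keyadj|exact: keyN].
Qed.

End Hash.

Lemma bernoulli_nat M k : M * expn (M + 1) k >= expn M k.+1 + k * expn M k.
Proof.
elim: k => [|k IH]; first by rewrite expn0 expn1 mul0n addn0 muln1.
rewrite !expnS; move: IH; set a := expn (M + 1) k; set b := expn M k.
rewrite expnS -/b => IH; nia.
Qed.

Lemma double_pow M : 0 < M -> 2 * expn M M <= expn (M + 1) M.
Proof.
move=> M0; have := bernoulli_nat M M; rewrite expnS.
set a := expn (M + 1) M; set b := expn M M; nia.
Qed.

Section Expand.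
Variables (G : Type) (mul : G -> G -> G) (one : G) (inv : G -> G).
Hypothesis HG : is_group mul one inv.
Local Notation gT := {classic G}.
Variable S : seq gT.

Definition lm (a x : gT) : gT := mul a x.

Lemma lm_inj a : injective (lm a).
Proof. by move=> x y; apply: (gcanl HG). Qed.

Definition TF (A : seq gT) : seq gT := undup (A ++ flatten [seq map (lm s) A | s <- S]).

Lemma memTF x A : (x \in TF A) = (x \in A) || has (fun s => has (fun a => x == lm s a) A) S.
Proof.
rewrite /TF mem_undup mem_cat; congr orb.
apply/flatten_mapP/hasP.
  move=> [s sS /mapP [a aA ->]]; exists s => //; apply/hasP; by exists a.
move=> [s sS /hasP [a aA /eqP ->]]; exists s => //; exact: map_f.
Qed.

Lemma TF_uniq A : uniq (TF A). Proof. exact: undup_uniq. Qed.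

Lemma TF_sub A : {subset A <= TF A}.
Proof. by move=> x xA; rewrite memTF xA. Qed.

Lemma TF_size A : uniq A -> size A <= size (TF A).
Proof. move=> uA; apply: uniq_leq_size => //; exact: TF_sub. Qed.

Lemma TF_expand A s : uniq A -> s \in S ->
  size A + count (fun f => lm s f \notin A) A <= size (TF A).
Proof.
move=> uA sS.
set L := A ++ map (lm s) (filter (fun f => lm s f \notin A) A).
have -> : size A + count (fun f => lm s f \notin A) A = size L.
  by rewrite size_cat size_map size_filter.
apply: uniq_leq_size.
  rewrite cat_uniq uA /= map_inj_uniq ?filter_uniq ?andbT //; last exact: lm_inj.
  apply/hasP => [[x /mapP [f]]]; rewrite mem_filter => /andP [h _] -> hA.
  by rewrite hA in h.
move=> x; rewrite mem_cat => /orP [xA|/mapP [f]]; first exact: TF_sub.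
rewrite mem_filter => /andP [_ fA] ->; rewrite memTF; apply/orP; right.
by apply/hasP; exists s => //; apply/hasP; exists f.
Qed.

Variable M : nat.
Hypothesis Hexp : forall F : seq gT, uniq F -> 0 < size F ->
  exists2 s, s \in S & size F < M * count (fun f => lm s f \notin F) F.

Lemma TF_grow A : uniq A -> 0 < size A -> (M + 1) * size A <= M * size (TF A).
Proof.
move=> uA A0; have [s sS hs] := Hexp uA A0.
have h := TF_expand uA sS.
apply: (@leq_trans (M * (size A + count (fun f => lm s f \notin A) A))); last first.
  by rewrite leq_mul2l h orbT.
rewrite mulnDr mulnDl mul1n leq_add2l; exact: ltnW.
Qed.

Lemma iterTF_uniq k A : uniq A -> uniq (iter k TF A).
Proof. by case: k => [|k] //= _; exact: TF_uniq. Qed.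

Lemma iterTF_size k A : uniq A -> size A <= size (iter k TF A).
Proof.
move=> uA; elim: k => [|k IH] //=; apply: leq_trans IH (TF_size _).
exact: iterTF_uniq.
Qed.

Lemma iterTF_grow k A : uniq A -> 0 < size A ->
  expn (M + 1) k * size A <= expn M k * size (iter k TF A).
Proof.
move=> uA A0; elim: k => [|k IH]; first by rewrite !expn0 !mul1n.
rewrite iterS.
have h := TF_grow (iterTF_uniq k uA) (leq_trans A0 (iterTF_size k uA)).
move: IH h; rewrite !expnS.
set a := expn (M + 1) k; set b := expn M k; set x := size (iter k TF A); set y := size (TF _).
nia.
Qed.

Lemma doubling A : 0 < M -> uniq A -> 0 < size A -> 2 * size A <= size (iter M TF A).
Proof.
move=> M0 uA A0; have h := iterTF_grow M uA A0; have d := double_pow M0.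
have p : 0 < expn M M by rewrite expn_gt0 M0.
move: h d p; set a := expn (M + 1) M; set b := expn M M; set y := size _.
nia.
Qed.

Lemma memTFk k x A : (x \in iter k TF A) = has (fun a => x \in iter k TF [:: a]) A.
Proof.
elim: k x => [|k IH] x /=.
  by apply/idP/hasP => [xA|[a aA]]; [exists x => //; rewrite inE|rewrite inE => /eqP ->].
rewrite memTF IH; apply/idP/hasP.
  case/orP=> [/hasP [a aA h]|/hasP [s sS /hasP [y]]].
    by exists a => //; rewrite memTF h.
  rewrite IH => /hasP [a aA ya] /eqP ->; exists a => //.
  by rewrite memTF; apply/orP; right; apply/hasP; exists s => //; apply/hasP; exists y.
move=> [a aA]; rewrite memTF => /orP [h|/hasP [s sS /hasP [y ya /eqP ->]]].
  by apply/orP; left; apply/hasP; exists a.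
apply/orP; right; apply/hasP; exists s => //; apply/hasP; exists y => //.
by rewrite IH; apply/hasP; exists a.
Qed.

Fixpoint Wk k : seq gT := if k is k'.+1 then Wk k' ++ [seq lm s w | s <- S, w <- Wk k'] else [:: one].

Lemma memW k g x : x \in iter k TF [:: g] -> exists2 w, w \in Wk k & x = mul w g.
Proof.
elim: k x => [|k IH] x /=.
  by rewrite inE => /eqP ->; exists one; rewrite ?inE ?(g1m HG).
rewrite memTF => /orP [/IH [w wW ->]|/hasP [s sS /hasP [y /IH [w wW ->] /eqP ->]]].
  by exists w => //; rewrite mem_cat wW.
exists (lm s w); last by rewrite /lm (gA HG).
by rewrite mem_cat; apply/orP; right; apply/allpairsP; exists (s, w).
Qed.

End Expand.

Section Match.
Variables (G : Type) (mul : G -> G -> G) (one : G) (inv : G -> G).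
Hypothesis HG : is_group mul one inv.
Local Notation gT := {classic G}.
Variables (S : seq gT) (M : nat).
Hypothesis M0 : 0 < M.
Hypothesis Hexp : forall F : seq gT, uniq F -> 0 < size F ->
  exists2 s, s \in S & size F < M * count (fun f => lm mul s f \notin F) F.

Definition Nb (g : gT) : seq gT := iter M (TF mul S) [:: g].

Lemma finite_match (P : seq (gT * bool)) : exists phi : gT * bool -> gT,
  {in P &, injective phi} /\ (forall y, y \in P -> phi y \in Nb y.1).
Proof.
pose Y := undup P.
pose Z : seq gT := undup ((one : gT) :: flatten [seq Nb y.1 | y <- Y]).
have oneZ : (one : gT) \in Z by rewrite mem_undup inE eqxx.
pose A := seq_sub Y.
pose B := seq_sub Z.
pose b0 : B := SeqSub oneZ.
pose Nf (a : A) : {set B} := [set b : B | val b \in Nb (val a).1].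
have HH : forall Yi : {set A}, Yi \subset [set: A] -> #|Yi| <= #|NU Nf Yi|.
  move=> Yi _.
  pose Ysub := [seq val a | a <- enum Yi].
  have uY : uniq Ysub by rewrite map_inj_uniq ?enum_uniq //; exact: val_inj.
  have sY : size Ysub = #|Yi| by rewrite size_map cardE.
  pose Fs : seq gT := undup [seq y.1 | y <- Ysub].
  have [Y0|Yn0] := posnP #|Yi|; first by rewrite Y0.
  have Fs0 : 0 < size Fs.
    have [a aYi] : exists a, a \in Yi by apply/card_gt0P.
    have : (val a).1 \in Fs by rewrite mem_undup; apply: map_f; apply: map_f; rewrite mem_enum.
    by case: (Fs).
  have h1 : size Ysub <= 2 * size Fs.
    have -> : 2 * size Fs = size [seq (f, b) | f <- Fs, b <- [:: true; false]].
      by rewrite size_allpairs mulnC.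
    apply: uniq_leq_size => // y yY; apply/allpairsP; exists (y.1, y.2) => /=.
    split; last by case: y {yY}.
      by rewrite mem_undup; apply: map_f.
    by case: (y.2).
  have h2 := doubling HG Hexp M0 (undup_uniq _) Fs0.
  have h3 : size (iter M (TF mul S) Fs) <= #|NU Nf Yi|.
    rewrite cardE -(size_map val); apply: uniq_leq_size; first exact: iterTF_uniq (undup_uniq _).
    move=> x; rewrite memTFk => /hasP [g]; rewrite mem_undup => /mapP [y yYs ->] xN.
    move: yYs => /mapP [a aY ya].
    have xZ : x \in Z.
      rewrite mem_undup inE; apply/orP; right; apply/flatten_mapP; exists (val a).
        exact: valP.
      by rewrite -ya.
    apply/mapP; exists (SeqSub xZ) => //; rewrite mem_enum; apply/bigcupP; exists a.
      by rewrite -mem_enum.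
    by rewrite inE /= -ya.
  by rewrite -sY; apply: leq_trans h1 (leq_trans h2 h3).
have [f [finj fN]] := @hall A B b0 #|[set: A]| [set: A] Nf (leqnn _) HH.
exists (fun y => if insub y is Some a then val (f a) else one); split.
  move=> y y' yP y'P.
  have yY : y \in Y by rewrite mem_undup.
  have y'Y : y' \in Y by rewrite mem_undup.
  rewrite (insubT (mem Y) yY) (insubT (mem Y) y'Y) => /val_inj /finj.
  by move=> h; have := h (in_setT _) (in_setT _); case.
move=> y yP; have yY : y \in Y by rewrite mem_undup.
rewrite (insubT (mem Y) yY); have := fN (SeqSub yY) (in_setT _).
by rewrite inE.
Qed.

End Match.

Section Compact.
Variables (L V : eqType) (Nb : L -> seq V) (e : nat -> L) (v0 : V).
Hypothesis esurj : forall y, exists k, e k = y.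

Definition valid (phi : L -> V) (P : seq L) :=
  {in P &, injective phi} /\ (forall y, y \in P -> phi y \in Nb y).

Hypothesis fin : forall P : seq L, exists phi, valid phi P.

Definition pre n := map e (iota 0 n).

Lemma mem_pre x n : x \in pre n -> exists2 i, i < n & x = e i.
Proof. by case/mapP=> i; rewrite mem_iota add0n => /andP [_ h] ->; exists i. Qed.

Lemma pre_mem i n : i < n -> e i \in pre n.
Proof. by move=> h; apply: map_f; rewrite mem_iota add0n h. Qed.

Lemma valid_sub phi P P' : valid phi P -> {subset P' <= P} -> valid phi P'.
Proof.
move=> [hi hn] s; split; first by move=> x y /s xP /s yP; apply: hi.
by move=> y /s; apply: hn.
Qed.

Lemma pre_subset m m' : m <= m' -> {subset pre m <= pre m'}.
Proof. by move=> h x /mem_pre [i im ->]; apply: pre_mem; apply: leq_trans h. Qed.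

Definition Ext n (p : L -> V) := forall m, exists phi, valid phi (pre m) /\
  (forall i, i < n -> phi (e i) = p (e i)).

Lemma Ext_valid n p : Ext n p -> valid p (pre n).
Proof.
move=> h; have [phi [[hi hn] ha]] := h n.
have eq : forall y, y \in pre n -> phi y = p y by move=> y /mem_pre [i ilt ->]; apply: ha.
split.
  by move=> x y xP yP; rewrite -(eq x xP) -(eq y yP); apply: hi.
by move=> y yP; rewrite -(eq y yP); apply: hn.
Qed.

Lemma bound_list (Q : V -> nat -> Prop) (l : seq V) :
  (forall v m m', m <= m' -> Q v m -> Q v m') ->
  (forall v, v \in l -> exists m, Q v m) -> exists Mx, forall v, v \in l -> Q v Mx.
Proof.
move=> mono; elim: l => [|a l IH] h; first by exists 0.
have [ma ha] := h a (mem_head _ _).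
have [ml hl] := IH (fun v vl => h v (@mem_behead _ (a :: l) v vl)).
exists (maxn ma ml) => v; rewrite inE => /orP [/eqP ->|vl].
  by apply: mono ha; apply: leq_maxl.
by apply: mono (hl v vl); apply: leq_maxr.
Qed.

Lemma step n p : Ext n p -> exists p', Ext n.+1 p' /\ (forall i, i < n -> p' (e i) = p (e i)).
Proof.
move=> hE.
have [/existsP [j ej]|nold] := boolP [exists j : 'I_n, e j == e n].
  move/eqP: ej => ej.
  exists p; split=> // m; have [phi [hv ha]] := hE m; exists phi; split=> // i.
  rewrite ltnS leq_eqVlt => /orP [/eqP ->|]; last exact: ha.
  by rewrite -ej; apply: ha.
have neq : forall i, i < n -> e i != e n.
  move=> i ilt; apply/negP => /eqP h; move/existsP: nold; apply.
  by exists (Ordinal ilt); rewrite h.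
apply: NNPP => nex.
pose upd (v : V) (y : L) := if y == e n then v else p y.
have hQ : forall v, v \in Nb (e n) -> exists m, forall phi, valid phi (pre m) ->
    ~ (forall i, i < n.+1 -> phi (e i) = upd v (e i)).
  move=> v _; apply: NNPP => nm; apply: nex; exists (upd v); split; last first.
    by move=> i ilt; rewrite /upd (negbTE (neq i ilt)).
  move=> m; apply: NNPP => nm2; apply: nm; exists m => phi hv ha; apply: nm2.
  by exists phi.
have [Mx hMx] := @bound_list (fun v m => forall phi, valid phi (pre m) ->
    ~ (forall i, i < n.+1 -> phi (e i) = upd v (e i))) (Nb (e n))
  (fun v m m' le h phi hv => h phi (valid_sub hv (pre_subset le))) hQ.
have [phi [hv ha]] := hE (maxn Mx n.+1).
have enP : e n \in pre (maxn Mx n.+1) by apply: pre_mem; rewrite leq_max ltnSn orbT.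
have vN : phi (e n) \in Nb (e n) by apply: hv.2.
apply: (hMx _ vN phi (valid_sub hv (pre_subset (leq_maxl _ _)))).
move=> i; rewrite ltnS leq_eqVlt => /orP [/eqP ->|ilt]; first by rewrite /upd eqxx.
by rewrite /upd (negbTE (neq i ilt)); apply: ha.
Qed.

Fixpoint pseq n : L -> V :=
  if n is n'.+1 then
    epsilon (inhabits (fun _ : L => v0))
      (fun p' => Ext n p' /\ (forall i, i < n' -> p' (e i) = pseq n' (e i)))
  else fun _ => v0.

Lemma pseq_ok n : Ext n (pseq n) /\
  (forall i, i < n.-1 -> pseq n (e i) = pseq n.-1 (e i)).
Proof.
elim: n => [|n [IH _]].
  split=> // m; have [phi hv] := fin (pre m); by exists phi.
have := step IH => ex; exact: (epsilon_spec _ _ ex).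
Qed.

Lemma pseq_agree n n' i : n <= n' -> i < n -> pseq n' (e i) = pseq n (e i).
Proof.
move=> le; elim: n' le => [|n' IH]; first by rewrite leqn0 => /eqP ->.
rewrite leq_eqVlt => /orP [/eqP ->//|]; rewrite ltnS => le ilt.
by rewrite (pseq_ok n'.+1).2 //= ?IH //; apply: leq_trans ilt le.
Qed.

Lemma compact : exists iota : L -> V,
  (forall y y', iota y = iota y' -> y = y') /\ (forall y, iota y \in Nb y).
Proof.
have ex : forall y, exists k, e k == y by move=> y; have [k hk] := esurj y; exists k; rewrite hk.
pose k y := ex_minn (ex y).
have ek : forall y, e (k y) = y.
  by move=> y; rewrite /k; case: ex_minnP => m /eqP.
exists (fun y => pseq (k y).+1 y); split.
  move=> y y'; set n := (maxn (k y) (k y')).+1.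
  have h1 : pseq (k y).+1 (e (k y)) = pseq n (e (k y)).
    by rewrite (pseq_agree (n:=(k y).+1)) // /n ltnS leq_maxl.
  have h2 : pseq (k y').+1 (e (k y')) = pseq n (e (k y')).
    by rewrite (pseq_agree (n:=(k y').+1)) // /n ltnS leq_maxr.
  rewrite ek in h1; rewrite ek in h2.
  rewrite h1 h2; have [hi _] := Ext_valid (pseq_ok n).1; apply: hi.
    by rewrite -(ek y); apply: pre_mem; rewrite ltnS leq_maxl.
  by rewrite -(ek y'); apply: pre_mem; rewrite ltnS leq_maxr.
move=> y; have [_ hn] := Ext_valid (pseq_ok (k y).+1).1; apply: hn.
by rewrite -{1}(ek y); apply: pre_mem.
Qed.

End Compact.

Fixpoint rsum (f : nat -> R) (n : nat) : R :=
  if n is k.+1 then (rsum f k + f k)%R else 0%R.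

Section Mean.
Variables (G : Type) (m : (G -> Prop) -> R).
Hypothesis m0 : forall A, (0 <= m A)%R.
Hypothesis madd : forall A B, (forall x, A x -> B x -> False) ->
       m (fun x => A x \/ B x) = (m A + m B)%R.

Lemma m_ext A B : (forall x, A x <-> B x) -> m A = m B.
Proof. by move=> h; congr m; apply: funext => x; apply: propext. Qed.

Lemma m_empty : m (fun _ => False) = 0%R.
Proof.
have h := madd (A := fun _ => False) (B := fun _ => False) (fun _ f _ => f).
rewrite (@m_ext (fun x => False \/ False) (fun _ => False)) in h; last by move=> x; tauto.
lra.
Qed.

Lemma m_mono A B : (forall x, A x -> B x) -> (m A <= m B)%R.
Proof.
move=> hAB.
have h := madd (A := A) (B := fun x => B x /\ ~ A x) (fun x a b => b.2 a).
rewrite (@m_ext (fun x => A x \/ (B x /\ ~ A x)) B) in h; last first.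
  move=> x; split; [case=> [/hAB //|[]//]|move=> bx].
  by case: (classic (A x)) => ax; [left|right].
have := m0 (fun x => B x /\ ~ A x); lra.
Qed.

Lemma m_sum (A : nat -> G -> Prop) n :
  (forall i j x, i < n -> j < n -> A i x -> A j x -> i = j) ->
  m (fun x => exists2 j, j < n & A j x) = rsum (fun j => m (A j)) n.
Proof.
elim: n => [|n IH] hd /=.
  by rewrite -m_empty; apply: m_ext => x; split=> // [[j]].
rewrite -IH; last by move=> i j x ilt jlt; apply: hd; apply: ltnW.
rewrite -madd.
  apply: m_ext => x; split.
    case=> j; rewrite ltnS leq_eqVlt => /orP [/eqP ->|jlt] h; [right|left] => //.
    by exists j.
  by case=> [[j jlt h]|h]; [exists j => //; apply: ltnW|exists n].
move=> x [j jlt h1] h2.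
by have := hd j n x (ltnW jlt) (ltnSn n) h1 h2 => e; rewrite e ltnn in jlt.
Qed.

End Mean.

Section Folner.
Variables (G : Type) (mul : G -> G -> G) (one : G) (inv : G -> G).
Hypothesis HG : is_group mul one inv.
Local Notation gT := {classic G}.
Variables (S : seq gT).
Hypothesis Sgen : generates mul one S.
Hypothesis Hamen : amenable mul inv.

Lemma enum_surj : exists e : nat -> (gT * bool), forall y, exists k, e k = y.
Proof.
exists (fun n => match @unpickle (seq nat * bool)%type n with
  | Some (ix, b) => ((foldr mul one (map (nth one S) ix) : gT), b)
  | None => ((one : gT), true) end).
move=> [g b]; have [l [lS ->]] := Sgen g.
exists (pickle (map (index^~ S) l, b)); rewrite pickleK; congr (_, _).
congr foldr; rewrite -map_comp; elim: l lS => [|a l IH] lS //=.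
have aS : (a : gT) \in S by apply/(@InP gT); apply: lS; left.
rewrite /= (@nth_index gT one a S aS) IH //.
by move=> x hx; apply: lS; right.
Qed.

Lemma folner M : 0 < M -> exists F : seq gT, [/\ uniq F, 0 < size F &
   forall s, s \in S -> M * count (fun f => lm mul s f \notin F) F <= size F].
Proof.
move=> M0; apply: NNPP => nF.
have Hexp : forall F : seq gT, uniq F -> 0 < size F ->
    exists2 s, s \in S & size F < M * count (fun f => lm mul s f \notin F) F.
  move=> F uF F0; apply: NNPP => ns; apply: nF; exists F; split=> // s sS.
  by rewrite leqNgt; apply/negP => h; apply: ns; exists s.
have [e esurj] := enum_surj.
have fin := finite_match HG M0 Hexp.
have [iota [iinj iN]] := @compact _ _ (fun y => Nb mul S M y.1) e (one : gT) esurj fin.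
pose W := Wk mul one S M.
have hw : forall g b, has (fun w : gT => iota (g, b) == mul w g) W.
  move=> g b; have [w wW ew] := memW HG (iN (g, b)).
  by apply/hasP; exists w => //; rewrite ew.
pose idx b g := find (fun w : gT => iota (g, b) == mul w g) W.
have idxlt : forall b g, idx b g < size W by move=> b g; rewrite -has_find.
have iota_idx : forall b g, iota (g, b) = mul (nth one W (idx b g)) g.
  by move=> b g; apply/eqP; apply: (@nth_find _ (one : gT) _ W (hw g b)).
have [mm [mm0 [mm1 [madd minv]]]] := Hamen.
pose Bs b := fun x : G => exists g, x = iota (g, b).
have Bs1 : forall b, mm (Bs b) = 1%R.
  move=> b.
  pose T j := fun x => idx b (mul (inv (nth one W j)) x) = j.
  have eB : mm (Bs b) = mm (fun x => exists2 j, j < size W & T j x).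
    apply: m_ext => x; split.
      move=> [g ->]; exists (idx b g) => //; rewrite /T iota_idx.
      by rewrite (gKm HG).
    move=> [j jlt hT]; exists (mul (inv (nth one W j)) x).
    by rewrite iota_idx hT (gmK HG).
  rewrite eB (m_sum madd); last first.
    move=> i j x ilt jlt; rewrite /T => hi hj.
    have e1 : x = iota (mul (inv (nth one W i)) x, b) by rewrite iota_idx hi (gmK HG).
    have e2 : x = iota (mul (inv (nth one W j)) x, b) by rewrite iota_idx hj (gmK HG).
    have := iinj _ _ (etrans (esym e1) e2); case => eg.
    by rewrite -hi -hj eg.
  have -> : rsum (fun j => mm (T j)) (size W) =
            rsum (fun j => mm (fun g => idx b g = j)) (size W).
    elim: (size W) => [|n IH] //=; rewrite IH; congr Rplus.
    exact: (minv (nth one W n) (fun g => idx b g = n)).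
  rewrite -(m_sum madd); last by move=> i j x _ _ -> ->.
  rewrite -mm1; apply: m_ext => x; split=> // _; by exists (idx b x).
have disj : forall x, Bs true x -> Bs false x -> False.
  by move=> x [g ->] [g' /iinj].
have := madd _ _ disj; rewrite !Bs1 => h2.
have := m_mono mm0 madd (A := fun x => Bs true x \/ Bs false x) (B := fun _ => True)
   (fun _ _ => I).
rewrite h2 mm1; lra.
Qed.

End Folner.

Theorem theorem1p3
  (G : Type) (mul : G -> G -> G) (one : G) (inv : G -> G)
  (HG : is_group mul one inv)
  (S : seq G) (Ssym : symmetric_gen inv S) (Sgen : generates mul one S)
  (Hamen : amenable mul inv)
  (H : nat -> G -> Prop) (Hsub : forall i, is_subgroup mul one inv (H i))
  (C : nat -> finType) (pi : forall i, G -> C i) (act : forall i, G -> C i -> C i)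
  (HC : forall i, is_coset_space mul inv (H i) (pi i) (act i))
  (Hinf : forall M : nat, exists N : nat, forall i, (N <= i)%N -> (M <= #|C i|)%N) :
  Un_cv (fun i => (INR (sweepout_width (act i) S) / INR #|C i|)%R) 0%R.
Proof.
move=> eps eps0.
pose S' : seq {classic G} := S.
pose K := (2 * size S + 1)%N.
have K1pos : (0 < INR K.+1)%R by apply: lt_0_INR; apply/ltP.
have [M [hM M0]] := archimed_cor1 (eps / INR K.+1) (Rdiv_lt_0_compat _ _ eps0 K1pos).
have M0' : (0 < M)%N by apply/ltP.
have Ssym' : forall s : {classic G}, s \in S' -> (inv s : {classic G}) \in S'.
  by move=> s /(@InP {classic G}) /Ssym /(@InP {classic G}).
have [F [uF F0 Fol]] := @folner G mul one inv HG S' Sgen Hamen M M0'.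
pose N := size F; pose e := (N %/ M)%N.
have Fol' : forall s, s \in S' -> (count (fun f => (mul s f : {classic G}) \notin F) F <= e)%N.
  by move=> s sS; rewrite /e leq_divRL // mulnC; apply: Fol.
have hMe : (M * e <= N)%N by rewrite mulnC /e leq_divM.
have [I0 hI] := Hinf (N * M)%N.
exists I0 => n hn.
have hC : (N * M <= #|C n|)%N by apply: hI; apply/leP.
have [psurj [_ pact]] := HC n.
have act_mul : forall g h c, act n (mul g h) c = act n g (act n h c).
  by move=> g h c; have [h0 <-] := psurj c; rewrite !pact (gA HG).
have act_one : forall c, act n one c = c.
  by move=> c; have [h0 <-] := psurj c; rewrite pact (g1m HG).
have [z [hz hsw]] := @main_hash G mul one inv HG (C n) (act n) act_mul act_one S' F e
   (pi n one) Ssym' uF F0 Fol'.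
set sw := sweepout_width (act n) S in hsw *.
set c := #|C n| in hC hz *.
have hNp : (0 < N)%N := F0.
have hMz : (M * z <= 2 * c * size S)%N.
  have : (N * (M * z) <= N * (2 * c * size S))%N.
    have t1 : (M * (N * z) <= M * (c * size S * (e + e)))%N by rewrite leq_mul2l hz orbT.
    have t2 : (c * size S * 2 * (M * e) <= c * size S * 2 * N)%N by rewrite leq_mul2l hMe orbT.
    move: t1 t2; set ss := size S; nia.
  by rewrite leq_mul2l; case/orP => // h0; move: hNp; rewrite (eqP h0).
have hsw2 : (M * sw <= c * K)%N.
  rewrite /K; apply: (@leq_trans (M * z + M * N)).
    by rewrite -mulnDr leq_mul2l hsw orbT.
  have : (M * N <= c)%N by rewrite mulnC.
  move: hMz; lia.
have c0 : (0 < c)%N by apply: leq_trans hC; rewrite muln_gt0 hNp.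
have rc : (0 < INR c)%R by apply: lt_0_INR; apply/ltP.
rewrite /Rdist Rminus_0_r Rabs_right; last first.
  apply: Rle_ge; apply: Rmult_le_pos; [exact: pos_INR|apply: Rlt_le; exact: Rinv_0_lt_compat].
have rM : (0 < INR M)%R by apply: lt_0_INR; apply/ltP.
have h1 : (INR M * INR sw <= INR c * INR K)%R.
  by rewrite -!mult_INR; apply: le_INR; apply/leP.
have h2 : (INR K.+1 < eps * INR M)%R.
  have ea : (/ INR M * INR M = 1)%R by apply: Rinv_l; apply: Rgt_not_eq.
  have eb : (/ INR K.+1 * INR K.+1 = 1)%R by apply: Rinv_l; apply: Rgt_not_eq.
  move: hM; rewrite /Rdiv; set a := (/ INR M)%R; set b := (/ INR K.+1)%R => hM.
  have := Rmult_lt_compat_r (INR M * INR K.+1) _ _ (Rmult_lt_0_compat _ _ rM K1pos) hM.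
  have e1 : (a * (INR M * INR K.+1) = INR K.+1)%R by rewrite -Rmult_assoc ea Rmult_1_l.
  have e2 : (eps * b * (INR M * INR K.+1) = eps * INR M * (b * INR K.+1))%R by ring.
  by rewrite e1 e2 eb Rmult_1_r.
have h3 : (INR K < INR K.+1)%R by apply: lt_INR; apply/ltP.
apply: (Rmult_lt_reg_r (INR c)) => //.
rewrite /Rdiv Rmult_assoc Rinv_l; last by apply: Rgt_not_eq.
nra.
Qed.
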